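(* Let $X\subset\mathbb{R}^n$ be bounded, let $X_I, X_U\subset X$ with $X_I\cap X_U=\emptyset$. Let $f\colon X\to\mathbb{R}^n$ define the dynamics $x(k+1)=f(x(k))$ (assumed to have unique solutions). Fix $T\in\mathbb{N}_+$ and let $\Xi$ be the set of all trajectories $\xi=\{x(k)\}_{k=0}^T$ consistent with these dynamics and with $x(0)\in X_I$. Let $V\colon\mathbb{R}^n\to\mathbb{R}$ be continuous and suppose that (i) $V(x)\le 0$ for all $x\in X_I$; (ii) $V(x)>0$ for all $x\in X_U$; (iii) for every trajectory $\xi=\{x(k)\}_{k=0}^T\in\Xi$, $$V(x(k+1))-V(x(k))<\frac1T\Big(\inf_{x\in X_U}V(x)-\sup_{x\in X_I}V(x)\Big),\qquad k=0,\dots,T-1.$$ Then $V$ is a safety (barrier) certificate: for every $\xi\in\Xi$ and every $k\in\{0,\dots,T\}$, $x(k)\notin X_U$.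
   Context: Trajectories are finite sequences of states generated by the deterministic discrete-time dynamics from an initial state in $X_I$. *)

(* Defs.v *)
From HB Require Import structures.
From mathcomp Require Import all_boot all_order all_algebra.
From mathcomp Require Import all_classical all_reals all_analysis.
Set Implicit Arguments. Unset Strict Implicit. Unset Printing Implicit Defensive.
Import Order.TTheory GRing.Theory Num.Theory.
Import numFieldNormedType.Exports.
Local Open Scope classical_set_scope.
Local Open Scope ring_scope.

(* A trajectory xi = {x(k)}_{k=0}^T of x(k+1) = f(x(k)) with x(0) in X_I.
   f is only meaningful on X: we require x(k) \in X for k = 0..T and
   x(k+1) = f(x(k)) for k = 0..T-1. Values of x beyond T are irrelevant. *)
Definition trajectory {R : realType} {n : nat} (X XI : set 'rV[R]_n)
  (f : 'rV[R]_n -> 'rV[R]_n) (T : nat) (x : nat -> 'rV[R]_n) : Prop :=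
  XI (x 0%N) /\
  (forall k, (k <= T)%N -> X (x k)) /\
  (forall k, (k < T)%N -> x k.+1 = f (x k)).

(* Main.v *)
Require Import Defs.
From HB Require Import structures.
From mathcomp Require Import all_boot all_order all_algebra.
From mathcomp Require Import all_classical all_reals all_analysis.
From mathcomp Require Import lra.
Import Order.TTheory GRing.Theory Num.Theory.
Import numFieldNormedType.Exports.
Local Open Scope classical_set_scope.
Local Open Scope ring_scope.

Theorem proposition2 (R : realType) (n : nat) (X XI XU : set 'rV[R]_n)
  (f : 'rV[R]_n -> 'rV[R]_n) (T : nat) (V : 'rV[R]_n -> R) :
  bounded_set X -> XI `<=` X -> XU `<=` X -> XI `&` XU = set0 ->
  (0 < T)%N ->
  continuous V ->
  (forall x, XI x -> V x <= 0) ->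
  (forall x, XU x -> 0 < V x) ->
  (forall xi, trajectory X XI f T xi ->
     forall k, (k < T)%N ->
       ((V (xi k.+1) - V (xi k))%:E <
        (ereal_inf ((fun x => (V x)%:E) @` XU) - ereal_sup ((fun x => (V x)%:E) @` XI))
          * (T%:R^-1)%:E)%E) ->
  forall xi, trajectory X XI f T xi ->
    forall k, (k <= T)%N -> ~ XU (xi k).
Proof.
move=> _ _ _ hIU hT _ hI hU hstep xi hxi k hk hxk.
have hx0 : XI (xi 0%N) by case: hxi.
have hInf0 : (0 <= ereal_inf ((fun x => (V x)%:E) @` XU))%E.
  apply: le_ereal_inf_tmp => _ [x Hx <-]; rewrite lee_fin; exact/ltW/hU.
have hInfk : (ereal_inf ((fun x => (V x)%:E) @` XU) <= (V (xi k))%:E)%E.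
  by apply: ereal_inf_lbound; exists (xi k).
have hSup0 : (ereal_sup ((fun x => (V x)%:E) @` XI) <= 0)%E.
  apply: ge_ereal_sup => _ [x Hx <-]; rewrite lee_fin; exact: hI.
have hSupx : ((V (xi 0%N))%:E <= ereal_sup ((fun x => (V x)%:E) @` XI))%E.
  by apply: ereal_sup_ubound; exists (xi 0%N).
move: hstep hInf0 hInfk hSup0 hSupx.
set I := ereal_inf _; set S := ereal_sup _.
case: I => [i| |] //; case: S => [s| |] // hstep.
rewrite !lee_fin => i0 ik s0 sx.
have hs : forall j, (j < T)%N -> V (xi j.+1) - V (xi j) < (i - s) * T%:R^-1.
  by move=> j hj; have := hstep xi hxi j hj; rewrite -EFinB -EFinM lte_fin.
have Tpos : (0 : R) < T%:R by rewrite ltr0n.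
have key : forall j, (0 < j)%N -> (j <= T)%N ->
    V (xi j) < V (xi 0%N) + j%:R * ((i - s) * T%:R^-1).
  elim=> [//|j IH] _ hj.
  have := hs j hj.
  case: j IH hj => [|j] IH hj.
    by rewrite mulr1n => h; lra.
  have -> : j.+2%:R = j.+1%:R + 1 :> R by rewrite -natr1.
  have := IH isT (ltnW hj); rewrite mulrDl => h1 h2; lra.
case: k hk hxk ik => [|k] hk hxk ik.
  by have : (XI `&` XU) (xi 0%N) by []; rewrite hIU.
have := key k.+1 isT hk.
have hc : k.+1%:R * ((i - s) * T%:R^-1) <= i - s.
  have hkT : k.+1%:R <= T%:R :> R by rewrite ler_nat.
  rewrite mulrA ler_pdivrMr // [_ * (i - s)]mulrC.
  apply: ler_wpM2l => //; rewrite subr_ge0; exact: le_trans s0 i0.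
move=> h; clear -h hc ik sx; lra.
Qed.
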